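(* Let $y\in\mathbb{R}^{k+1}$, $y\neq0$, let $T$ be any point on the line through the origin $O$ and $y$ with $T\neq y$, and let $\delta=|T-y|$. Then $$\omega(x,y)=\frac{|T|}{\delta}\quad\text{for all } x \text{ with } |x-T|=\delta,\ x\neq y .$$
   Context: For $x\neq y$ in $\mathbb{R}^{k+1}$, the spherical ratio of two points is $\omega(x,y)=\left|\dfrac{|x|^2-|y|^2}{|x-y|^2}\right|$; $|T|=|OT|$ is the distance from the origin to $T$. *)

(* Defs.v *)
From mathcomp Require Import all_boot all_order all_algebra.
Set Implicit Arguments. Unset Strict Implicit. Unset Printing Implicit Defensive.
Import Order.TTheory GRing.Theory Num.Theory.
Local Open Scope ring_scope.

Definition sqnorm (R : rcfType) (n : nat) (x : 'rV[R]_n) : R :=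
  \sum_(i < n) x 0 i ^+ 2.

Definition enorm (R : rcfType) (n : nat) (x : 'rV[R]_n) : R :=
  Num.sqrt (sqnorm x).

Definition omega (R : rcfType) (n : nat) (x y : 'rV[R]_n) : R :=
  `| (sqnorm x - sqnorm y) / sqnorm (x - y) |.

(* Main.v *)
Require Import Defs.
From mathcomp Require Import all_boot all_order all_algebra.
From mathcomp Require Import ring.
Import Order.TTheory GRing.Theory Num.Theory.
Local Open Scope ring_scope.

Definition dotp {R : rcfType} {n : nat} (x y : 'rV[R]_n) : R :=
  \sum_(i < n) x 0 i * y 0 i.

Lemma sqnorm_lin (R : rcfType) (n : nat) (x y : 'rV[R]_n) (a b : R) :
  sqnorm (a *: x + b *: y) =
  a ^+ 2 * sqnorm x + 2 * a * b * dotp x y + b ^+ 2 * sqnorm y.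
Proof.
rewrite /sqnorm /dotp !mulr_sumr -!big_split /=.
apply: eq_bigr => i _; rewrite !mxE; ring.
Qed.

Lemma sqnorm_ge0 (R : rcfType) (n : nat) (x : 'rV[R]_n) : 0 <= sqnorm x.
Proof. by apply: sumr_ge0 => i _; rewrite sqr_ge0. Qed.

Lemma sqnorm_eq0 (R : rcfType) (n : nat) (x : 'rV[R]_n) :
  sqnorm x = 0 -> x = 0.
Proof.
move=> /eqP; rewrite /sqnorm psumr_eq0; last by move=> i _; rewrite sqr_ge0.
move=> /allP H; apply/matrixP => i j; rewrite (ord1 i) mxE.
have := H j (mem_index_enum j); rewrite sqrf_eq0 => /eqP ->; by [].
Qed.

Theorem lemma1 (R : rcfType) (k : nat) (y T : 'rV[R]_(k.+1)) :
  y != 0 ->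
  (exists t : R, T = t *: y) ->
  T != y ->
  forall x : 'rV[R]_(k.+1),
    enorm (x - T) = enorm (T - y) -> x != y ->
    omega x y = enorm T / enorm (T - y).
Proof.
move=> y0 [t ->] Ty x hn xy.
have e1 : x - t *: y = 1 *: x + (- t) *: y by rewrite scale1r scaleNr.
have e2 : t *: y - y = 0 *: x + (t - 1) *: y by rewrite scale0r add0r scalerBl scale1r.
have e3 : x - y = 1 *: x + (- 1) *: y by rewrite scale1r scaleN1r.
have e4 : t *: y = 0 *: x + t *: y by rewrite scale0r add0r.
move: hn; rewrite /enorm /omega e1 e2 e3 e4 !sqnorm_lin.
set Sxx := sqnorm x; set Syy := sqnorm y; set Sxy := dotp x y.
have Sx0 : 0 <= Sxx by apply: sqnorm_ge0.
have Sy0 : 0 <= Syy by apply: sqnorm_ge0.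
have Syn0 : Syy != 0.
  by apply/eqP => /sqnorm_eq0 /eqP; rewrite (negbTE y0).
have ge1 : 0 <= 1 ^+ 2 * Sxx + 2 * 1 * - t * Sxy + (- t) ^+ 2 * Syy.
  by rewrite -sqnorm_lin sqnorm_ge0.
have ge2 : 0 <= 0 ^+ 2 * Sxx + 2 * 0 * (t - 1) * Sxy + (t - 1) ^+ 2 * Syy.
  by rewrite -sqnorm_lin sqnorm_ge0.
move=> hn.
have H : 1 ^+ 2 * Sxx + 2 * 1 * - t * Sxy + (- t) ^+ 2 * Syy =
         0 ^+ 2 * Sxx + 2 * 0 * (t - 1) * Sxy + (t - 1) ^+ 2 * Syy.
  by rewrite -(sqr_sqrtr ge1) -(sqr_sqrtr ge2) hn.
have hx : Sxx = (t - 1) ^+ 2 * Syy + 2 * t * Sxy - t ^+ 2 * Syy.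
  by rewrite -[RHS]addr0 -(subrr (0 ^+ 2 * Sxx + 2 * 0 * (t - 1) * Sxy + (t - 1) ^+ 2 * Syy)) -{1}H; ring.
have t1 : t - 1 != 0.
  apply: contra Ty; rewrite subr_eq0 => /eqP ->; by rewrite scale1r.
have den : 1 ^+ 2 * Sxx + 2 * 1 * -1 * Sxy + (-1) ^+ 2 * Syy != 0.
  apply: contra xy => /eqP h; rewrite -subr_eq0 e3; apply/eqP/sqnorm_eq0.
  by rewrite sqnorm_lin.
set E := 2 * (Sxy - Syy).
have d2 : 1 ^+ 2 * Sxx + 2 * 1 * -1 * Sxy + (-1) ^+ 2 * Syy = (t - 1) * E.
  by rewrite hx /E; ring.
have E0 : E != 0.
  by move: den; rewrite d2 mulf_eq0 negb_or => /andP [].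
have d1 : Sxx - Syy = t * E by rewrite hx /E; ring.
rewrite d2 d1.
have -> : (0 ^+ 2 * Sxx + 2 * 0 * t * Sxy + t ^+ 2 * Syy) = t ^+ 2 * Syy by ring.
have -> : (0 ^+ 2 * Sxx + 2 * 0 * (t - 1) * Sxy + (t - 1) ^+ 2 * Syy)
   = (t - 1) ^+ 2 * Syy by ring.
rewrite (sqrtrM _ (sqr_ge0 t)) (sqrtrM _ (sqr_ge0 (t - 1))) !sqrtr_sqr.
have s0 : Num.sqrt Syy != 0 by rewrite sqrtr_eq0 -ltNge lt_def Syn0 Sy0.
have n1 : `|t - 1| != 0 by rewrite normr_eq0.
have -> : t * E / ((t - 1) * E) = t / (t - 1) by field; rewrite E0 t1.
have -> : `|t| * Num.sqrt Syy / (`|t - 1| * Num.sqrt Syy) = `|t| / `|t - 1|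
  by field; rewrite s0 n1.
by rewrite normf_div.
Qed.
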